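(* Let $Q$ be a finite inverse semigroup. Then every left I-order in $Q$ is straight.
   Context: For an element $a$ of an inverse semigroup $Q$, $a^{-1}$ is its unique inverse. A subsemigroup $S$ of $Q$ is a left I-order in $Q$ if every $q\in Q$ can be written $q=a^{-1}b$ with $a,b\in S$; it is straight if $a,b$ can always be chosen with $a\,\mathcal{R}\,b$ in $Q$ (Green's relation of $Q$). *)

(* Defs.v *)
From mathcomp Require Import all_boot.
Set Implicit Arguments. Unset Strict Implicit. Unset Printing Implicit Defensive.

Section InvSg.
Variables (T : Type) (mul : T -> T -> T).

Definition is_inverse (a b : T) : Prop :=
  mul (mul a b) a = a /\ mul (mul b a) b = b.

Definition inverse_semigroup (inv : T -> T) : Prop :=
  [/\ associative mul,
      (forall a, is_inverse a (inv a)) &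
      (forall a b, is_inverse a b -> b = inv a)].

(** Green's relation R: a Q^1 = b Q^1. *)
Definition greenR (a b : T) : Prop :=
  (a = b \/ exists x, a = mul b x) /\ (b = a \/ exists y, b = mul a y).

End InvSg.

Section Orders.
Variables (T : finType) (mul : T -> T -> T) (inv : T -> T).

Definition subsemigroup (S : {set T}) : Prop :=
  forall a b, a \in S -> b \in S -> mul a b \in S.

Definition left_I_order (S : {set T}) : Prop :=
  subsemigroup S /\
  forall q : T, exists a b, [/\ a \in S, b \in S & q = mul (inv a) b].

Definition straight_left_I_order (S : {set T}) : Prop :=
  left_I_order S /\
  forall q : T, exists a b,
    [/\ a \in S, b \in S, greenR mul a b & q = mul (inv a) b].

End Orders.

(* Main.v *)
Require Import Defs.
From mathcomp Require Import all_boot.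
From mathcomp Require Import zify.

Set Implicit Arguments. Unset Strict Implicit. Unset Printing Implicit Defensive.

Lemma inv_facts (T : Type) (mul : T -> T -> T) (inv : T -> T)
  (HQ : inverse_semigroup mul inv) :
  (forall x y z, mul x (mul y z) = mul (mul x y) z) /\
  (forall a, mul (mul a (inv a)) a = a) /\
  (forall a, mul (mul (inv a) a) (inv a) = inv a) /\
  (forall a, inv (inv a) = a) /\
  (forall e, mul e e = e -> inv e = e) /\
  (forall e f, mul e e = e -> mul f f = f -> mul e f = mul f e) /\
  (forall a b, inv (mul a b) = mul (inv b) (inv a)).
Proof.
case: HQ => A I U.
have I1 a : mul (mul a (inv a)) a = a by case: (I a).
have I2 a : mul (mul (inv a) a) (inv a) = inv a by case: (I a).
have I1' w a : mul (mul (mul w a) (inv a)) a = mul w a by rewrite -!A (A a) I1.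
have I2' w a : mul (mul (mul w (inv a)) a) (inv a) = mul w (inv a) by rewrite -!A (A (inv a)) I2.
have II a : inv (inv a) = a.
  by symmetry; apply: U; split; [apply: I2 | apply: I1].
have IE e : mul e e = e -> inv e = e.
  by move=> He; symmetry; apply: U; split; rewrite He.
have Id' w e : mul e e = e -> mul (mul w e) e = mul w e by move=> He; rewrite -A He.
have EF e f : mul e e = e -> mul f f = f -> mul (mul e f) (mul e f) = mul e f.
  move=> He Hf.
  have Hx : mul (mul f (inv (mul e f))) e = inv (mul e f).
    apply: U; split.
    - rewrite !A Id' // Id' //.
      by rewrite -(A _ e f) I1.
    - rewrite !A Id' // Id' //.
      rewrite -(A (mul f _) e f) -(A f _ (mul e f)) -(A f (mul _ (mul e f))).
      by rewrite I2.
  have Hxx : mul (inv (mul e f)) (inv (mul e f)) = inv (mul e f).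
    transitivity (mul (mul (mul f (inv (mul e f))) e) (mul (mul f (inv (mul e f))) e)).
      by rewrite Hx.
    rewrite !A.
    rewrite -(A (mul f _) e f) -(A f _ (mul e f)) -(A f (mul _ (mul e f))).
    by rewrite I2 Hx.
  have Hef : mul e f = inv (mul e f) by rewrite -{1}(II (mul e f)) IE.
  by rewrite {3}Hef -Hxx -Hef.
have C e f : mul e e = e -> mul f f = f -> mul e f = mul f e.
  move=> He Hf.
  have -> : mul f e = inv (mul e f).
    apply: U; split.
    - rewrite !A Id' // Id' // -(A _ e f); exact: EF.
    - rewrite !A Id' // Id' // -(A _ f e); exact: EF.
  by rewrite IE //; apply: EF.
refine (conj A (conj I1 (conj I2 (conj II (conj IE (conj C _)))))).
move=> a b; symmetry; apply: U.
have Ea x : mul (mul x (inv x)) (mul x (inv x)) = mul x (inv x) by rewrite A I1.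
have Eb x : mul (mul (inv x) x) (mul (inv x) x) = mul (inv x) x by rewrite A I2.
split.
- transitivity (mul (mul a (mul (mul b (inv b)) (mul (inv a) a))) b); first by rewrite !A.
  rewrite (C (mul b (inv b))) //.
  by rewrite !A I1' I1.
- transitivity (mul (mul (inv b) (mul (mul (inv a) a) (mul b (inv b)))) (inv a)); first by rewrite !A.
  rewrite (C (mul (inv a) a)) //.
  by rewrite !A I2' I2.
Qed.

Lemma L_class (T : finType) (mul : T -> T -> T) (inv : T -> T)
  (HQ : inverse_semigroup mul inv) (S : {set T}) :
  left_I_order mul inv S ->
  forall g, mul g g = g -> exists x, x \in S /\ mul (inv x) x = g.
Proof.
move=> [HS HI].
have [A [I1 [I2 [II [IE [C IM]]]]]] := inv_facts HQ.
have I1' w a : mul (mul (mul w a) (inv a)) a = mul w a by rewrite -!A (A a) I1.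
have I2' w a : mul (mul (mul w (inv a)) a) (inv a) = mul w (inv a) by rewrite -!A (A (inv a)) I2.
pose Ls g := [set x | mul x g == x].
suff H : forall n g, #|T| - #|Ls g| < n -> mul g g = g ->
  exists x, x \in S /\ mul (inv x) x = g.
  by move=> g; apply: (H #|T|.+1); lia.
elim=> [|n IH] g //.
move=> Hn Hg.
have [a [b [Ha Hb Hq]]] := HI g.
have gi : g = mul (inv b) a by rewrite -{1}(IE g Hg) Hq IM II.
set e' := mul (inv a) a.
have He' : mul e' e' = e' by rewrite /e' A I2.
have ge : mul g e' = g.
  rewrite -{1}Hg {2}gi /e' !A I1' -A -gi; exact: Hg.
case: (eqVneq g e') => [->|Hne]; first by exists a.
set e := mul a (inv a).
have He : mul e e = e by rewrite /e A I1.
have lt1 : #|Ls g| < #|Ls e'|.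
  apply: proper_card; apply/properP; split.
    apply/subsetP => x; rewrite !inE => /eqP Hx.
    by rewrite -{1}Hx -A ge Hx.
  exists e'; rewrite !inE ?He' //.
  apply/negP => /eqP H; move: Hne.
  by rewrite -{1}ge (C g e') // H eqxx.
have le2 : #|Ls e'| <= #|Ls e|.
  rewrite -(card_in_imset (f := fun x => mul x (inv a))).
    apply: subset_leq_card; apply/subsetP => y /imsetP [x]; rewrite !inE => /eqP Hx ->.
    by apply/eqP; rewrite /e !A I2'.
  move=> x y; rewrite !inE => /eqP Hx /eqP Hy Hxy.
  by rewrite -Hx -Hy /e' !A Hxy.
have lt3 : #|Ls e| <= #|T| by apply: max_card.
have [y [Hy Hye]] := IH e ltac:(lia) He.
exists (mul y b); split; first exact: HS.
rewrite IM -A (A (inv y)) Hye /e.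
rewrite -Hg; rewrite {1}gi Hq !A //.
Qed.

Theorem corollary2p5 (T : finType) (mul : T -> T -> T) (inv : T -> T)
  (HQ : inverse_semigroup mul inv) (S : {set T}) :
  left_I_order mul inv S -> straight_left_I_order mul inv S.
Proof.
move=> HL; split => //.
have [A [I1 [I2 [II [IE [C IM]]]]]] := inv_facts HQ.
have I1' w a : mul (mul (mul w a) (inv a)) a = mul w a by rewrite -!A (A a) I1.
have I2' w a : mul (mul (mul w (inv a)) a) (inv a) = mul w (inv a) by rewrite -!A (A (inv a)) I2.
case: HL => HS HI.
move=> q.
have [a [b [Ha Hb Hq]]] := HI q.
move Ee: (mul a (inv a)) => e. move Ef: (mul b (inv b)) => f.
have He : mul e e = e by rewrite -Ee A I1.
have Hf : mul f f = f by rewrite -Ef A I1.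
have Hg : mul (mul e f) (mul e f) = mul e f.
  transitivity (mul (mul e (mul f e)) f); first by rewrite !A.
  by rewrite (C f e) // !A He -A Hf.
have [x [Hx Hxg]] := L_class HQ (conj HS HI) Hg.
have xg : mul x (mul e f) = x by rewrite -Hxg A I1.
have xe : mul x e = x.
  by rewrite -{1}xg -A -(A e f e) (C f e) // (A e e) He xg.
have xf : mul x f = x by rewrite -{1}xg -A -A Hf xg.
have Rcd : mul (mul x a) (inv (mul x a)) = mul (mul x b) (inv (mul x b)).
  rewrite !IM -!A (A a) (A b) Ee Ef !A xe xf //.
exists (mul x a), (mul x b); split.
- exact: HS.
- exact: HS.
- split; right.
  + exists (mul (inv (mul x b)) (mul x a)); by rewrite A -Rcd I1.
  + exists (mul (inv (mul x a)) (mul x b)); by rewrite A Rcd I1.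
- rewrite IM -A (A (inv x)) Hxg Hq -Ee -Ef !A.
  by rewrite I2 I1'.
Qed.
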